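(* Let $W_2\in\{M_2,S_2\}$ and let $\phi:W_2\to W_2$ be a linear map with $\sigma_{\mathcal{K}}(\phi(A))=\sigma_{\mathcal{K}}(A)$ for all $A\in W_2$. If $A\in W_2$ has two distinct strict boundary L-eigenvalues, then $$\sigma_{\mathcal{K}}^{int}(A)=\sigma_{\mathcal{K}}^{int}(\phi(A))\neq\emptyset\quad\text{and}\quad \sigma_{\mathcal{K}}^{bd}(A)=\sigma_{\mathcal{K}}^{bd}(\phi(A)).$$
   Context: $M_2$: real $2\times2$ matrices; $S_2$: symmetric ones. Lorentz cone $\mathcal{K}=\{(x_1,x_2)^T:|x_1|\le x_2\}$. A real $\lambda$ is an L-eigenvalue of $A$ if there is a nonzero $x\in\mathcal{K}$ with $(A-\lambda I)x\in\mathcal{K}$ and $x^T(A-\lambda I)x=0$; $\sigma_{\mathcal{K}}(A)$ is the set of L-eigenvalues; $\sigma^{int}_{\mathcal{K}}(A)$ (resp. $\sigma^{bd}_{\mathcal{K}}(A)$) consists of those with such an $x$ in the interior (resp. on the boundary) of $\mathcal{K}$. For $A=\begin{bmatrix}a&b\\c&d\end{bmatrix}$, a boundary L-eigenvalue $\lambda$ is of type $+$ if $\lambda=\frac{a+d+b+c}{2}$ and $a-d\le c-b$, of type $-$ if $\lambda=\frac{a+d-b-c}{2}$ and $a-d\le b-c$; it is strict if it is of type $+$ with $a-d<c-b$ or of type $-$ with $a-d<b-c$ (if of both types, strict when at least one of these strict inequalities holds). *)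

(* Defs.v *)
From mathcomp Require Import all_boot all_order all_algebra.
From mathcomp Require Import reals.
Set Implicit Arguments. Unset Strict Implicit. Unset Printing Implicit Defensive.
Import Order.TTheory GRing.Theory Num.Theory.
Local Open Scope ring_scope.

Section LorentzDefs.
Variable R : realType.

Definition i0 : 'I_2 := @ord0 1.
Definition i1 : 'I_2 := @ord_max 1.

Definition inK (x : 'cV[R]_2) : Prop := `|x i0 0| <= x i1 0.
Definition intK (x : 'cV[R]_2) : Prop := `|x i0 0| < x i1 0.
Definition bdK (x : 'cV[R]_2) : Prop := `|x i0 0| = x i1 0.

Definition Lpair (A : 'M[R]_2) (lam : R) (x : 'cV[R]_2) : Prop :=
  [/\ x != 0, inK x, inK ((A - lam%:M) *m x)
    & (x^T *m (A - lam%:M) *m x) 0 0 = 0].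

Definition Lspec (A : 'M[R]_2) (lam : R) : Prop := exists x, Lpair A lam x.
Definition Lspec_int (A : 'M[R]_2) (lam : R) : Prop :=
  exists x, Lpair A lam x /\ intK x.
Definition Lspec_bd (A : 'M[R]_2) (lam : R) : Prop :=
  exists x, Lpair A lam x /\ bdK x.

Definition strict_bd (A : 'M[R]_2) (lam : R) : Prop :=
  let a := A i0 i0 in let b := A i0 i1 in
  let c := A i1 i0 in let d := A i1 i1 in
  Lspec_bd A lam /\
  ((lam = (a + d + b + c) / 2 /\ a - d < c - b) \/
   (lam = (a + d - b - c) / 2 /\ a - d < b - c)).

(* W_2 : all of M_2 (sym = false) or S_2 (sym = true) *)
Definition inW (sym : bool) (A : 'M[R]_2) : Prop := if sym then A^T = A else True.

End LorentzDefs.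

(* Main.v *)
Require Import Defs.
From mathcomp Require Import all_boot all_order all_algebra.
From mathcomp Require Import reals ring lra.
Import Order.TTheory GRing.Theory Num.Theory.
Set Implicit Arguments. Unset Strict Implicit. Unset Printing Implicit Defensive.
Local Open Scope ring_scope.

Lemma sum2 (R : realType) (F : 'I_2 -> R) : \sum_(j < 2) F j = F i0 + F i1.
Proof. rewrite big_ord_recl big_ord1; congr (_ + F _); exact: val_inj. Qed.

Lemma mulE (R : realType) (M : 'M[R]_2) (x : 'cV[R]_2) i :
  (M *m x) i 0 = M i i0 * x i0 0 + M i i1 * x i1 0.
Proof. by rewrite mxE sum2. Qed.

Lemma formE (R : realType) (M : 'M[R]_2) (x : 'cV[R]_2) :
  (x^T *m M *m x) 0 0 = x i0 0 * (M *m x) i0 0 + x i1 0 * (M *m x) i1 0.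
Proof. by rewrite -mulmxA mxE sum2 !mxE. Qed.

Lemma ord2_cases (i : 'I_2) : i = i0 \/ i = i1.
Proof.
case: i => [[|[|n]] Hi]; [left|right|by []]; exact: val_inj.
Qed.

Lemma cV2_eq0 (R : realType) (x : 'cV[R]_2) :
  x = 0 <-> (x i0 0 = 0 /\ x i1 0 = 0).
Proof.
split; first by move=> ->; rewrite !mxE.
move=> [h0 h1]; apply/matrixP => i j; rewrite (ord1 j) mxE.
by case: (ord2_cases i) => ->.
Qed.

Lemma absle (R : realType) (a b : R) : `|a| <= b <-> 0 <= b + a /\ 0 <= b - a.
Proof. rewrite ler_norml; split; [case/andP => *; split; lra | case=> *; apply/andP; split; lra]. Qed.
Lemma abslt (R : realType) (a b : R) : `|a| < b <-> 0 < b + a /\ 0 < b - a.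
Proof. rewrite ltr_norml; split; [case/andP => *; split; lra | case=> *; apply/andP; split; lra]. Qed.

Definition L1 (R : realType) (M : 'M[R]_2) := (M i0 i0 + M i0 i1 + M i1 i0 + M i1 i1)/2.
Definition L2 (R : realType) (M : 'M[R]_2) := (M i0 i0 + M i1 i1 - M i0 i1 - M i1 i0)/2.
Definition K1 (R : realType) (M : 'M[R]_2) := (M i1 i0 + M i1 i1 - M i0 i0 - M i0 i1)/2.
Definition K2 (R : realType) (M : 'M[R]_2) := (M i0 i1 - M i1 i0 + M i1 i1 - M i0 i0)/2.

Lemma Lpair_coord (R : realType) (M : 'M[R]_2) l (x : 'cV[R]_2) :
  let u := x i1 0 + x i0 0 in let v := x i1 0 - x i0 0 in
  let U := (L1 M - l) * u + K2 M * v in let V := K1 M * u + (L2 M - l) * v in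
  Lpair M l x <-> ~ (x i0 0 = 0 /\ x i1 0 = 0) /\ (0 <= u /\ 0 <= v) /\ (0 <= U /\ 0 <= V)
     /\ u * U + v * V = 0.
Proof.
move=> u v U V.
have eU : ((M - l%:M) *m x) i1 0 + ((M - l%:M) *m x) i0 0 = U.
  rewrite !mulE !mxE /= !mulr0n !mulr1n !subr0 /U /u /v /L1 /K2; by field.
have eV : ((M - l%:M) *m x) i1 0 - ((M - l%:M) *m x) i0 0 = V.
  rewrite !mulE !mxE /= !mulr0n !mulr1n !subr0 /V /u /v /L2 /K1; by field.
have eF : (x^T *m (M - l%:M) *m x) 0 0 = (u * U + v * V) / 2.
  rewrite formE -eU -eV /u /v; by field.
rewrite /Lpair /inK eF.
split.
- case=> /eqP hx /absle [h1 h2] /absle [h3 h4] h5.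
  rewrite eU in h3; rewrite eV in h4.
  split; first by move=> /cV2_eq0.
  do 2 (split => //).
  by move/eqP: h5; rewrite mulf_eq0 invr_eq0 pnatr_eq0 orbF => /eqP.
- case=> hx [[h1 h2] [[h3 h4] h5]]; split.
  + by apply/eqP => /cV2_eq0.
  + by apply/absle.
  + by apply/absle; rewrite eU eV.
  + by rewrite h5 mul0r.
Qed.

Definition IntEig (R : realType) (M : 'M[R]_2) l := exists u v, 0 < u /\ 0 < v /\
  (l - L1 M) * u = K2 M * v /\ (l - L2 M) * v = K1 M * u.
Definition BdE (R : realType) (M : 'M[R]_2) l :=
  (l = L1 M /\ 0 <= K1 M) \/ (l = L2 M /\ 0 <= K2 M).

Definition mk2 (R : realType) (a b : R) : 'cV[R]_2 := \col_(i < 2) (if i == i0 then a else b).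
Lemma mk2E (R : realType) (a b : R) : mk2 a b i0 0 = a /\ mk2 a b i1 0 = b.
Proof. by rewrite !mxE. Qed.

Lemma prod0 (R : realType) (u U v V : R) : 0 <= u -> 0 <= U -> 0 <= v -> 0 <= V ->
  u * U + v * V = 0 -> u * U = 0 /\ v * V = 0.
Proof.
move=> h1 h2 h3 h4 h5.
have a1 : 0 <= u * U by apply: mulr_ge0.
have a2 : 0 <= v * V by apply: mulr_ge0.
split; lra.
Qed.

Lemma mul0_pos (R : realType) (u U : R) : 0 < u -> u * U = 0 -> U = 0.
Proof. by move=> hu /eqP; rewrite mulf_eq0 gt_eqF //= => /eqP. Qed.

Lemma C2 (R : realType) (M : 'M[R]_2) l : Lspec_int M l <-> IntEig M l.
Proof.
split.
- case=> x [/Lpair_coord [hx [[h1 h2] [[h3 h4] h5]]] /abslt [hu hv]].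
  have [e1 e2] := prod0 h1 h3 h2 h4 h5.
  have f1 := mul0_pos hu e1. have f2 := mul0_pos hv e2.
  exists (x i1 0 + x i0 0), (x i1 0 - x i0 0); do 2 (split => //); split; lra.
- case=> u [v [hu [hv [e1 e2]]]].
  exists (mk2 ((u - v)/2) ((u + v)/2)).
  have [m1 m2] := mk2E ((u - v)/2) ((u + v)/2).
  split; last by rewrite /intK m1 m2; apply/abslt; split; lra.
  apply/Lpair_coord; rewrite m1 m2.
  have -> : (u + v) / 2 + (u - v) / 2 = u by field.
  have -> : (u + v) / 2 - (u - v) / 2 = v by field.
  have -> : (L1 M - l) * u + K2 M * v = 0 by lra.
  have -> : K1 M * u + (L2 M - l) * v = 0 by lra.
  split; first by case=> _; lra.
  rewrite !mulr0 addr0; split; split; lra.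
Qed.

Lemma C1 (R : realType) (M : 'M[R]_2) l : Lspec_bd M l <-> BdE M l.
Proof.
split.
- case=> x [/Lpair_coord [hx [[h1 h2] [[h3 h4] h5]]] hb].
  have [e1 e2] := prod0 h1 h3 h2 h4 h5.
  move: hb; rewrite /bdK.
  case: (lerP 0 (x i0 0)) => hs; [rewrite ger0_norm // | rewrite ltr0_norm //] => hb.
  +
    have hu : 0 < x i1 0 + x i0 0.
      rewrite lt_def; apply/andP; split => //; apply/eqP => h; apply: hx; split; lra.
    have f1 := mul0_pos hu e1.
    have hv0 : x i1 0 - x i0 0 = 0 by lra.
    rewrite hv0 mulr0 addr0 in f1 h4.
    rewrite ?mulr0 ?addr0 in h4.
    left; split; last by move: h4; rewrite pmulr_lge0.
    by move: f1 => /eqP; rewrite mulf_eq0 (gt_eqF hu) orbF subr_eq0 => /eqP ->.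
  + have hv : 0 < x i1 0 - x i0 0 by lra.
    have f2 := mul0_pos hv e2.
    have hu0 : x i1 0 + x i0 0 = 0 by lra.
    rewrite hu0 mulr0 add0r in f2 h3.
    rewrite ?mulr0 ?add0r in h3.
    right; split; last by move: h3; rewrite pmulr_lge0.
    by move: f2 => /eqP; rewrite mulf_eq0 (gt_eqF hv) orbF subr_eq0 => /eqP ->.
- case=> [[-> hk]|[-> hk]].
  + exists (mk2 1 1); have [m1 m2] := mk2E (1:R) 1.
    split; last by rewrite /bdK m1 m2 normr1.
    apply/Lpair_coord => /=; rewrite m1 m2 subrr.
    split; first by case; lra.
    split; first by split; lra.
    split; first by split; nra.
    nra.
  + exists (mk2 (-1) 1); have [m1 m2] := mk2E (-1:R) 1.
    split; last by rewrite /bdK m1 m2 normrN normr1.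
    apply/Lpair_coord => /=; rewrite m1 m2 subrr.
    split; first by case; lra.
    split; first by split; lra.
    split; first by split; nra.
    nra.
Qed.

Lemma C3 (R : realType) (M : 'M[R]_2) l : Lspec M l <-> BdE M l \/ IntEig M l.
Proof.
rewrite -C1 -C2; split.
- case=> x hp; have := hp; case=> _ hk _ _.
  move: hk; rewrite /inK le_eqVlt => /orP [/eqP h|h].
  + by left; exists x.
  + by right; exists x.
- by case=> [[x [h _]]|[x [h _]]]; exists x.
Qed.

Definition chi (R : realType) (M : 'M[R]_2) l := (l - L1 M) * (l - L2 M) - K1 M * K2 M.

Lemma IntEig_props (R : realType) (M : 'M[R]_2) l : IntEig M l ->
  chi M l = 0 /\ (0 <= K2 M -> L1 M <= l) /\ (0 <= K1 M -> L2 M <= l).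
Proof.
case=> u [v [hu [hv [e1 e2]]]].
split.
- have h : chi M l * (u * v) = 0.
    have -> : chi M l * (u * v) = ((l - L1 M) * u) * ((l - L2 M) * v) - (K2 M * v) * (K1 M * u).
      by rewrite /chi; ring.
    by rewrite e1 e2 subrr.
  by move/eqP: h; rewrite mulf_eq0 (gt_eqF (mulr_gt0 hu hv)) orbF => /eqP.
- split => hk.
  + have : 0 <= (l - L1 M) * u by rewrite e1; apply: mulr_ge0 => //; lra.
    by rewrite pmulr_lge0 // subr_ge0.
  + have : 0 <= (l - L2 M) * v by rewrite e2; apply: mulr_ge0 => //; lra.
    by rewrite pmulr_lge0 // subr_ge0.
Qed.

Lemma chi_two (R : realType) (M : 'M[R]_2) a b : chi M a = 0 -> chi M b = 0 -> a != b ->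
  a + b = L1 M + L2 M.
Proof.
move=> ha hb hab.
have h : (a - b) * (a + b - L1 M - L2 M) = 0.
  have -> : (a - b) * (a + b - L1 M - L2 M) = chi M a - chi M b by rewrite /chi; ring.
  by rewrite ha hb subrr.
move/eqP: h; rewrite mulf_eq0 subr_eq0 (negbTE hab) /= => /eqP; lra.
Qed.

Definition Nice (R : realType) (M : 'M[R]_2) := 0 < K1 M /\ 0 < K2 M /\ L1 M != L2 M.
Definition mu (R : realType) (M : 'M[R]_2) :=
  (L1 M + L2 M) / 2 + Num.sqrt (((L1 M - L2 M) / 2) ^+ 2 + K1 M * K2 M).

Lemma nice_spec (R : realType) (M : 'M[R]_2) : Nice M ->
  [/\ L1 M < mu M, L2 M < mu M, chi M (mu M) = 0,
      (forall l, IntEig M l <-> l = mu M) &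
      (forall l, BdE M l <-> l = L1 M \/ l = L2 M)].
Proof.
case=> hk1 [hk2 hne].
set d := (L1 M - L2 M) / 2.
have hD : 0 <= d ^+ 2 + K1 M * K2 M.
  apply: addr_ge0; [exact: sqr_ge0 | apply: mulr_ge0; lra].
pose s := Num.sqrt (d ^+ 2 + K1 M * K2 M).
have hs0 : 0 <= s by exact: sqrtr_ge0.
have hs2 : s * s = d * d + K1 M * K2 M by rewrite -expr2 sqr_sqrtr // expr2.
have hk : 0 < K1 M * K2 M by apply: mulr_gt0.
have hmu : mu M = (L1 M + L2 M) / 2 + s by rewrite /mu.
have h1 : L1 M < mu M.
  rewrite hmu; have ed : L1 M = (L1 M + L2 M) / 2 + d by rewrite /d; field.
  rewrite {1}ed ltrD2l; nra.
have h2 : L2 M < mu M.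
  rewrite hmu; have ed : L2 M = (L1 M + L2 M) / 2 - d by rewrite /d; field.
  rewrite {1}ed ltrD2l; nra.
have hc : chi M (mu M) = 0.
  rewrite /chi hmu.
  have -> : ((L1 M + L2 M) / 2 + s - L1 M) * ((L1 M + L2 M) / 2 + s - L2 M)
     = s * s - d * d by rewrite /d; field.
  by rewrite hs2; ring.
split => // l; split.
- move=> hl; have [c1 [c2 c3]] := IntEig_props hl.
  have l1 : L1 M <= l by apply: c2; lra.
  case: (eqVneq l (mu M)) => // hn.
  have := chi_two c1 hc hn; lra.
- move=> ->; exists (K2 M), (mu M - L1 M); split => //; split; first by lra.
  split; first by ring.
  by move: hc; rewrite /chi => hc; lra.
- by case=> [[-> _]|[-> _]]; [left|right].
- by case=> ->; [left|right]; split => //; lra.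
Qed.

Definition Sig (R : realType) (M : 'M[R]_2) l := BdE M l \/ IntEig M l.

Lemma noIntPair (R : realType) (M : 'M[R]_2) x y z :
  x != y -> x < z -> y < z -> Sig M y -> IntEig M z -> IntEig M x -> False.
Proof.
move=> hxy hxz hyz hy hz hx.
have [cz [z2 z1]] := IntEig_props hz.
have [cx [x2 x1]] := IntEig_props hx.
have exz : x + z = L1 M + L2 M by apply: chi_two => //; rewrite lt_eqF.
case: hy => [[[ey hk]|[ey hk]]|hy].
- have := x1 hk; lra.
- have := x2 hk; lra.
- have [cy _] := IntEig_props hy.
  have eyz : y + z = L1 M + L2 M by apply: chi_two => //; rewrite lt_eqF.
  move/eqP: hxy; lra.
Qed.

Lemma noBdTriple (R : realType) (M : 'M[R]_2) x y z :
  x != y -> x < z -> y < z -> Sig M y -> BdE M z -> BdE M x -> False.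
Proof.
move=> /eqP hxy hxz hyz hy hz hx.
case: hy => [hy|hy].
- by case: hx hy hz => [[ex _]|[ex _]] [[ey _]|[ey _]] [[ez _]|[ez _]]; lra.
- have [cy [y2 y1]] := IntEig_props hy.
  case: hx hz => [[ex k]|[ex k]] [[ez k']|[ez k']].
  + lra.
  + have := y1 k; lra.
  + have := y2 k; lra.
  + lra.
Qed.

Lemma config (R : realType) (M : 'M[R]_2) x y z :
  x != y -> x < z -> y < z ->
  (forall l, Sig M l <-> l = x \/ l = y \/ l = z) ->
  (IntEig M z /\ BdE M x /\ BdE M y /\ ~ IntEig M x /\ ~ IntEig M y /\ ~ BdE M z)
  \/ (IntEig M x /\ IntEig M y /\ BdE M z).
Proof.
move=> hxy hxz hyz hS.
have sx : Sig M x by apply/hS; left.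
have sy : Sig M y by apply/hS; right; left.
have sz : Sig M z by apply/hS; right; right.
have hyx : y != x by rewrite eq_sym.
case: (sz) => hz; last first.
  left.
  have nx : ~ IntEig M x by move=> hx; apply: (noIntPair hxy hxz hyz sy hz hx).
  have ny : ~ IntEig M y by move=> hy; apply: (noIntPair hyx hyz hxz sx hz hy).
  have bx : BdE M x by case: sx.
  have by_ : BdE M y by case: sy.
  do 5 (split => //).
  move=> bz; have := noBdTriple hxy hxz hyz sy bz bx; done.
right.
have ix : IntEig M x.
  case: sx => // bx; exfalso; exact: (noBdTriple hxy hxz hyz sy hz bx).
have iy : IntEig M y.
  case: sy => // by_; exfalso; exact: (noBdTriple hyx hyz hxz sx hz by_).
by [].
Qed.

Lemma algG (R : realType) (M : 'M[R]_2) x y z : x != y ->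
  IntEig M z -> BdE M x -> BdE M y -> L1 M + L2 M = x + y /\ chi M z = 0.
Proof.
move=> /eqP hxy hz hx hy; split; last by case: (IntEig_props hz).
by case: hx hy => [[ex _]|[ex _]] [[ey _]|[ey _]]; lra.
Qed.

Lemma algBd (R : realType) (M : 'M[R]_2) x y z : x != y ->
  IntEig M x -> IntEig M y -> BdE M z ->
  [/\ L1 M + L2 M = x + y, chi M x = 0, chi M y = 0 & (z = L1 M \/ z = L2 M)].
Proof.
move=> hxy hx hy hz.
have [cx _] := IntEig_props hx. have [cy _] := IntEig_props hy.
split => //; first by rewrite (chi_two cx cy hxy).
by case: hz => [[-> _]|[-> _]]; [left|right].
Qed.

Lemma lin_all (R : realType) (t : R) (Y B : 'M[R]_2) :
  [/\ L1 (t *: Y + B) = t * L1 Y + L1 B, L2 (t *: Y + B) = t * L2 Y + L2 B,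
      K1 (t *: Y + B) = t * K1 Y + K1 B & K2 (t *: Y + B) = t * K2 Y + K2 B].
Proof. by rewrite /L1 /L2 /K1 /K2 !mxE; split; ring. Qed.

Definition Xh (R : realType) : 'M[R]_2 := const_mx (1/2).

Lemma Xh_vals (R : realType) :
  [/\ L1 (Xh R) = 1, L2 (Xh R) = 0, K1 (Xh R) = 0 & K2 (Xh R) = 0].
Proof. by rewrite /L1 /L2 /K1 /K2 /Xh !mxE; split; field. Qed.

Lemma inW_comb (R : realType) sym (t : R) (X A : 'M[R]_2) :
  inW sym X -> inW sym A -> inW sym (t *: X + A).
Proof. by case: sym => //= hX hA; rewrite linearD linearZ /= hX hA. Qed.

Lemma inW_Xh (R : realType) sym : inW sym (Xh R).
Proof. by case: sym => //=; rewrite /Xh trmx_const. Qed.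

Definition P (R : realType) (M : 'M[R]_2) := L1 M * L2 M - K1 M * K2 M.

Lemma compare (R : realType) (M N : 'M[R]_2) : Nice M ->
  (forall l, Sig N l <-> Sig M l) ->
  L1 N + L2 N = L1 M + L2 M /\
  ((P N = P M /\ (IntEig N (mu M) /\ BdE N (L1 M) /\ BdE N (L2 M) /\
      ~ IntEig N (L1 M) /\ ~ IntEig N (L2 M) /\ ~ BdE N (mu M)))
   \/ (L1 N * L2 N = P M /\ P N = L1 M * L2 M)).
Proof.
move=> hM hS.
have [h1 h2 hc hI hB] := nice_spec hM.
have hne : L1 M != L2 M by case: hM => _ [].
have hSM : forall l, Sig N l <-> l = L1 M \/ l = L2 M \/ l = mu M.
  move=> l; rewrite hS /Sig hI hB; split.
  - by case=> [[]|] ->; auto.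
  - by case=> [->|[->|->]]; auto.
case: (config hne h1 h2 hSM) => [G|Bd].
- have [i [bx [by_ _]]] := G.
  have [eS cz] := algG hne i bx by_.
  split => //; left; split => //.
  have e : P N - P M = chi N (mu M) - chi M (mu M)
       + mu M * ((L1 N + L2 N) - (L1 M + L2 M)) by rewrite /P /chi; ring.
  by move: e; rewrite cz hc eS !subrr mulr0 addr0 => /eqP; rewrite subr_eq0 => /eqP.
- case: Bd => ix [iy bz].
  have [eS cx cy ez] := algBd hne ix iy bz.
  split => //; right.
  have e1 : P N = L1 M * L2 M.
    have e : P N - L1 M * L2 M = chi N (L1 M) - L1 M * ((L1 M + L2 M) - (L1 N + L2 N))
      by rewrite /P /chi; ring.
    by move: e; rewrite cx eS !subrr mulr0 subrr => /eqP; rewrite subr_eq0 => /eqP.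
  split => //.
  have hc' : (mu M - L1 M) * (mu M - L2 M) = K1 M * K2 M by move: hc; rewrite /chi => /eqP; rewrite subr_eq0 => /eqP.
  rewrite /P.
  case: ez => ez.
  + have e2 : L2 N = L1 M + L2 M - mu M by lra.
    rewrite -ez e2.
    have -> : mu M * (L1 M + L2 M - mu M) = L1 M * L2 M - (mu M - L1 M) * (mu M - L2 M) by ring.
    by rewrite hc'.
  + have e2 : L1 N = L1 M + L2 M - mu M by lra.
    rewrite -ez e2.
    have -> : (L1 M + L2 M - mu M) * mu M = L1 M * L2 M - (mu M - L1 M) * (mu M - L2 M) by ring.
    by rewrite hc'.
Qed.

Lemma quad3 (R : realType) (p q r t1 t2 t3 : R) : t1 != t2 -> t1 != t3 -> t2 != t3 ->
  p * t1 ^+ 2 + q * t1 + r = 0 -> p * t2 ^+ 2 + q * t2 + r = 0 ->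
  p * t3 ^+ 2 + q * t3 + r = 0 -> p = 0 /\ q = 0 /\ r = 0.
Proof.
move=> d12 d13 d23 e1 e2 e3.
have f12 : p * (t1 + t2) + q = 0.
  have : (t1 - t2) * (p * (t1 + t2) + q) = 0.
    have -> : (t1 - t2) * (p * (t1 + t2) + q) =
      (p * t1 ^+ 2 + q * t1 + r) - (p * t2 ^+ 2 + q * t2 + r) by ring.
    by rewrite e1 e2 subrr.
  by move/eqP; rewrite mulf_eq0 subr_eq0 (negbTE d12) /= => /eqP.
have f13 : p * (t1 + t3) + q = 0.
  have : (t1 - t3) * (p * (t1 + t3) + q) = 0.
    have -> : (t1 - t3) * (p * (t1 + t3) + q) =
      (p * t1 ^+ 2 + q * t1 + r) - (p * t3 ^+ 2 + q * t3 + r) by ring.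
    by rewrite e1 e3 subrr.
  by move/eqP; rewrite mulf_eq0 subr_eq0 (negbTE d13) /= => /eqP.
have hp : p = 0.
  have : (t2 - t3) * p = 0.
    have -> : (t2 - t3) * p = (p * (t1 + t2) + q) - (p * (t1 + t3) + q) by ring.
    by rewrite f12 f13 subrr.
  by move/eqP; rewrite mulf_eq0 subr_eq0 (negbTE d23) /= => /eqP.
have hq : q = 0 by move: f12; rewrite hp mul0r add0r.
split => //; split => //.
by move: e1; rewrite hp hq !mul0r !add0r.
Qed.

Lemma subE0 (R : realType) (a b : R) : a = b -> a - b = 0.
Proof. by move=> ->; rewrite subrr. Qed.

Definition Gp (R : realType) (b1 b2 b3 b4 y1 y2 y3 y4 a be k t : R) :=
  (t * y1 + b1) * (t * y2 + b2) - (t * y3 + b3) * (t * y4 + b4) = (t + a) * be - k.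
Definition Bp (R : realType) (b1 b2 b3 b4 y1 y2 y3 y4 a be k t : R) :=
  (t * y1 + b1) * (t * y2 + b2) = (t + a) * be - k.

Lemma threeG (R : realType) (b1 b2 b3 b4 y1 y2 y3 y4 a be k t1 t2 t3 : R) :
  t1 != t2 -> t1 != t3 -> t2 != t3 ->
  Gp b1 b2 b3 b4 y1 y2 y3 y4 a be k t1 -> Gp b1 b2 b3 b4 y1 y2 y3 y4 a be k t2 ->
  Gp b1 b2 b3 b4 y1 y2 y3 y4 a be k t3 -> b1 * b2 - b3 * b4 = a * be - k.
Proof.
move=> d12 d13 d23 g1 g2 g3.
have e : forall t, (y1 * y2 - y3 * y4) * t ^+ 2 + (b1 * y2 + y1 * b2 - y3 * b4 - b3 * y4 - be) * t
   + (b1 * b2 - b3 * b4 - a * be + k) =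
   ((t * y1 + b1) * (t * y2 + b2) - (t * y3 + b3) * (t * y4 + b4)) - ((t + a) * be - k).
  by move=> t; ring.
have [_ [_ hr]] := quad3 d12 d13 d23 (etrans (e t1) (subE0 g1)) (etrans (e t2) (subE0 g2))
  (etrans (e t3) (subE0 g3)).
lra.
Qed.

Lemma threeBd (R : realType) (b1 b2 b3 b4 y1 y2 y3 y4 a be k t1 t2 t3 : R) :
  y1 + y2 = 1 -> b1 + b2 = a + be -> 0 < k ->
  t1 != t2 -> t1 != t3 -> t2 != t3 ->
  Bp b1 b2 b3 b4 y1 y2 y3 y4 a be k t1 -> Bp b1 b2 b3 b4 y1 y2 y3 y4 a be k t2 ->
  Bp b1 b2 b3 b4 y1 y2 y3 y4 a be k t3 -> False.
Proof.
move=> hy hb hk d12 d13 d23 g1 g2 g3.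
have e : forall t, (y1 * y2) * t ^+ 2 + (b1 * y2 + y1 * b2 - be) * t
   + (b1 * b2 - a * be + k) =
   ((t * y1 + b1) * (t * y2 + b2)) - ((t + a) * be - k).
  by move=> t; ring.
have [hp [hq hr]] := quad3 d12 d13 d23 (etrans (e t1) (subE0 g1)) (etrans (e t2) (subE0 g2))
  (etrans (e t3) (subE0 g3)).
move/eqP: hp; rewrite mulf_eq0 => /orP [/eqP e1|/eqP e2].
- have e2 : y2 = 1 by lra.
  rewrite e1 e2 in hq.
  have eb1 : b1 = be by lra.
  have eb2 : b2 = a by lra.
  rewrite eb1 eb2 in hr; lra.
- have e1 : y1 = 1 by lra.
  rewrite e1 e2 in hq.
  have eb2 : b2 = be by lra.
  have eb1 : b1 = a by lra.
  rewrite eb1 eb2 in hr; lra.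
Qed.

Lemma point (R : realType) (A B X Y : 'M[R]_2) (t : R) :
  L1 X = 1 -> L2 X = 0 -> K1 X = 0 -> K2 X = 0 -> Nice (t *: X + A) ->
  (forall l, Sig (t *: Y + B) l <-> Sig (t *: X + A) l) ->
  (t * L1 Y + L1 B) + (t * L2 Y + L2 B) = (t + L1 A) + L2 A /\
  (Gp (L1 B) (L2 B) (K1 B) (K2 B) (L1 Y) (L2 Y) (K1 Y) (K2 Y) (L1 A) (L2 A) (K1 A * K2 A) t \/
   Bp (L1 B) (L2 B) (K1 B) (K2 B) (L1 Y) (L2 Y) (K1 Y) (K2 Y) (L1 A) (L2 A) (K1 A * K2 A) t).
Proof.
move=> x1 x2 x3 x4 hN hS.
have [eS hc] := compare hN hS.
have [l1 l2 k1 k2] := lin_all t Y B.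
have [m1 m2 m3 m4] := lin_all t X A.
rewrite x1 x2 x3 x4 !mulr0 !add0r mulr1 in m1 m2 m3 m4.
rewrite l1 l2 m1 m2 in eS.
split => //.
rewrite /Gp /Bp.
case: hc => [[hP _]|[hE _]]; [left|right].
- by move: hP; rewrite /P l1 l2 k1 k2 m1 m2 m3 m4 => ->.
- by move: hE; rewrite /P l1 l2 m1 m2 m3 m4 => ->.
Qed.

Lemma niceT (R : realType) (A : 'M[R]_2) (t : R) : Nice A -> t + L1 A != L2 A ->
  Nice (t *: Xh R + A).
Proof.
case=> h1 [h2 _] hn; have [x1 x2 x3 x4] := Xh_vals R.
have [m1 m2 m3 m4] := lin_all t (Xh R) A.
rewrite /Nice m1 m2 m3 m4 x1 x2 x3 x4 !mulr0 !add0r mulr1; split => //.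
Qed.

Unset Implicit Arguments.
Set Strict Implicit.

Theorem lemma4p1 (R : realType) (sym : bool) (phi : 'M[R]_2 -> 'M[R]_2)
  (phiW : forall A, inW sym A -> inW sym (phi A))
  (phi_lin : forall (k : R) (A B : 'M[R]_2), inW sym A -> inW sym B ->
     phi (k *: A + B) = k *: phi A + phi B)
  (phi_pres : forall A, inW sym A -> forall lam, Lspec (phi A) lam <-> Lspec A lam)
  (A : 'M[R]_2) (HA : inW sym A)
  (l1 l2 : R) (Hl12 : l1 != l2) (H1 : strict_bd A l1) (H2 : strict_bd A l2) :
  [/\ (forall lam, Lspec_int A lam <-> Lspec_int (phi A) lam),
      (exists lam, Lspec_int A lam)
    & (forall lam, Lspec_bd A lam <-> Lspec_bd (phi A) lam)].
Proof.
have hA : Nice A.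
  move: H1 H2; rewrite /strict_bd /= /Nice /L1 /L2 /K1 /K2.
  case=> _ [[e1 c1]|[e1 c1]] [_ [[e2 c2]|[e2 c2]]].
  - by exfalso; move/eqP: Hl12; apply; lra.
  - split; first lra; split; first lra.
    by apply/eqP => h; move/eqP: Hl12; apply; lra.
  - split; first lra; split; first lra.
    by apply/eqP => h; move/eqP: Hl12; apply; lra.
  - by exfalso; move/eqP: Hl12; apply; lra.
have sig_tr : forall M, inW sym M -> forall l, Sig (phi M) l <-> Sig M l.
  by move=> M hM l; rewrite /Sig -!C3; exact: phi_pres.
have [x1 x2 x3 x4] := Xh_vals R.
have hX := inW_Xh R sym.
have pt : forall t, t + L1 A != L2 A ->
  (t * L1 (phi (Xh R)) + L1 (phi A)) + (t * L2 (phi (Xh R)) + L2 (phi A)) = (t + L1 A) + L2 A /\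
  (Gp (L1 (phi A)) (L2 (phi A)) (K1 (phi A)) (K2 (phi A)) (L1 (phi (Xh R))) (L2 (phi (Xh R)))
     (K1 (phi (Xh R))) (K2 (phi (Xh R))) (L1 A) (L2 A) (K1 A * K2 A) t \/
   Bp (L1 (phi A)) (L2 (phi A)) (K1 (phi A)) (K2 (phi A)) (L1 (phi (Xh R))) (L2 (phi (Xh R)))
     (K1 (phi (Xh R))) (K2 (phi (Xh R))) (L1 A) (L2 A) (K1 A * K2 A) t).
  move=> t ht; apply: (@point R A (phi A) (Xh R) (phi (Xh R)) t) => //; first exact: niceT.
  move=> l; rewrite -phi_lin //; apply: sig_tr; exact: inW_comb.
have hne : L1 A <> L2 A by case: hA => _ [_ /eqP].
have hk : 0 < K1 A * K2 A by case: hA => k1 [k2 _]; apply: mulr_gt0.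
have [de ede] : {de : R | de = L2 A - L1 A} by exists (L2 A - L1 A).
have hde : de <> 0 by move=> h; apply: hne; lra.
have nt : forall c : R, c <> 1 -> c * de + L1 A != L2 A.
  move=> c hc; apply/eqP => h; apply: hde.
  have : (c - 1) * de = 0 by rewrite mulrBl mul1r; lra.
  move/eqP; rewrite mulf_eq0 => /orP [/eqP h'|/eqP //]; exfalso; apply: hc; lra.
have dt : forall c c' : R, c <> c' -> c * de != c' * de.
  move=> c c' hc; apply/eqP => h; apply: hde.
  have : (c - c') * de = 0 by rewrite mulrBl; lra.
  move/eqP; rewrite mulf_eq0 => /orP [/eqP h'|/eqP //]; exfalso; apply: hc; lra.
have [s0 h0] := pt _ (nt 0 ltac:(lra)).
have [s1 h1] := pt _ (nt (-1) ltac:(lra)).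
have [_ h2] := pt _ (nt (-2) ltac:(lra)).
have [_ h3] := pt _ (nt (-3) ltac:(lra)).
have [_ h4] := pt _ (nt (-4) ltac:(lra)).
have d01 := dt 0 (-1) ltac:(lra). have d02 := dt 0 (-2) ltac:(lra).
have d03 := dt 0 (-3) ltac:(lra). have d04 := dt 0 (-4) ltac:(lra).
have d12 := dt (-1) (-2) ltac:(lra). have d13 := dt (-1) (-3) ltac:(lra).
have d14 := dt (-1) (-4) ltac:(lra). have d23 := dt (-2) (-3) ltac:(lra).
have d24 := dt (-2) (-4) ltac:(lra). have d34 := dt (-3) (-4) ltac:(lra).
have hb : L1 (phi A) + L2 (phi A) = L1 A + L2 A by move: s0; rewrite !mul0r; lra.
have hy : L1 (phi (Xh R)) + L2 (phi (Xh R)) = 1.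
  have : de * (L1 (phi (Xh R)) + L2 (phi (Xh R)) - 1) = 0 by move: s1; rewrite !mulN1r; lra.
  by move/eqP; rewrite mulf_eq0 => /orP [/eqP //|/eqP]; lra.
have G0 : L1 (phi A) * L2 (phi A) - K1 (phi A) * K2 (phi A) = L1 A * L2 A - K1 A * K2 A.
  case: h0 => h0; case: h1 => h1; case: h2 => h2; case: h3 => h3; case: h4 => h4;
  first [ exact: (threeG d01 d02 d12 h0 h1 h2) | exact: (threeG d01 d03 d13 h0 h1 h3)
        | exact: (threeG d01 d04 d14 h0 h1 h4) | exact: (threeG d02 d03 d23 h0 h2 h3)
        | exact: (threeG d02 d04 d24 h0 h2 h4) | exact: (threeG d03 d04 d34 h0 h3 h4)
        | exact: (threeG d12 d13 d23 h1 h2 h3) | exact: (threeG d12 d14 d24 h1 h2 h4)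
        | exact: (threeG d13 d14 d34 h1 h3 h4) | exact: (threeG d23 d24 d34 h2 h3 h4)
        | exfalso; first [ exact: (threeBd hy hb hk d01 d02 d12 h0 h1 h2)
        | exact: (threeBd hy hb hk d01 d03 d13 h0 h1 h3)
        | exact: (threeBd hy hb hk d01 d04 d14 h0 h1 h4)
        | exact: (threeBd hy hb hk d02 d03 d23 h0 h2 h3)
        | exact: (threeBd hy hb hk d02 d04 d24 h0 h2 h4)
        | exact: (threeBd hy hb hk d03 d04 d34 h0 h3 h4)
        | exact: (threeBd hy hb hk d12 d13 d23 h1 h2 h3)
        | exact: (threeBd hy hb hk d12 d14 d24 h1 h2 h4)
        | exact: (threeBd hy hb hk d13 d14 d34 h1 h3 h4)
        | exact: (threeBd hy hb hk d23 d24 d34 h2 h3 h4) ] ].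
have sA : forall l, Sig (phi A) l <-> Sig A l := sig_tr A HA.
have [m1 m2 hc hI hB] := nice_spec hA.
have [eS [[hP G]|[hE hP']]] := compare hA sA; last first.
  by exfalso; rewrite /P in hP'; lra.
case: G => iz [bx [by_ [nx [ny nz]]]].
split.
- move=> lam; rewrite !C2 hI; split; first by move=> ->.
  move=> hl; have : Sig A lam by apply/sA; right.
  rewrite /Sig hI hB => -[[el|el]|//]; rewrite el in hl; contradiction.
- by exists (mu A); apply/C2/hI.
- move=> lam; rewrite !C1 hB; split; first by case=> ->.
  move=> hl; have : Sig A lam by apply/sA; left.
  rewrite /Sig hI hB => -[//|el]; rewrite el in hl; contradiction.
Qed.
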